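(* For a topological monoid $S$ with unit $e$, the following are equivalent: (1) the quasi-uniformity $\mathcal L\wedge\mathcal R$ generates the topology of $S$; (2) $e$ is an open unit of $S$; (3) $S$ has open central shifts. Moreover, conditions (1)–(3) imply (4): the quasi-uniformity $\mathcal L\wedge\mathcal R$ is rotund.
   Context: A topological monoid is a topological space with a continuous associative multiplication having a unit $e$. Let $\mathcal N_e$ be a neighborhood base at $e$. $\mathcal L\wedge\mathcal R$ is the quasi-uniformity on $S$ generated by the base $\{\{(x,y)\in S\times S:y\in UxV\}:U,V\in\mathcal N_e\}$; it generates the topology of $S$ if the topology $\{W: \forall x\in W\ \exists E\in\mathcal L\wedge\mathcal R,\ \{y:(x,y)\in E\}\subset W\}$ equals the given topology. $e$ is an open unit if $UxU$ is a neighborhood of $x$ for every neighborhood $U$ of $e$ and every $x\in S$. $S$ has open central shifts if for each $a\in S$ the map $S\times S\to S$, $(x,y)\mapsto xay$, is open. For an entourage $E$ let $B(x;E)=\{y:(x,y)\in E\}$, $B(A;E)=\bigcup_{a\in A}B(a;E)$, $E\circ F=\{(x,z):\exists y\,((x,y)\in E,(y,z)\in F)\}$. A quasi-uniformity is rotund if it has a base closed under $\circ$ which is rotund: $B(\overline A;U)\subset\overline{B(A;W\circ U)}$ for all $A\subset S$ and all $U,W$ in the base (closures in the topology of $S$). *)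

(* Defs.v *)
From mathcomp Require Import all_boot all_order.
From mathcomp Require Import all_classical topology.
Set Implicit Arguments. Unset Strict Implicit. Unset Printing Implicit Defensive.
Local Open Scope classical_set_scope.

Section Monoid.
Context {T : topologicalType} (mul : T -> T -> T) (e : T).

Definition topological_monoid : Prop :=
  continuous (fun p : T * T => mul p.1 p.2) /\
  (forall x y z, mul x (mul y z) = mul (mul x y) z) /\
  (forall x, mul e x = x) /\ (forall x, mul x e = x).

Definition triple_prod (U : set T) (x : T) (V : set T) : set T :=
  [set mul (mul u x) v | u in U & v in V].

Definition LR_basic (U V : set T) : set (T * T) :=
  [set p | triple_prod U p.1 V p.2].

(* the quasi-uniformity L /\ R: filter generated by the basic entourages,
   U, V ranging over the neighborhoods of e *)
Definition LR_entourage (E : set (T * T)) : Prop :=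
  exists U V, nbhs e U /\ nbhs e V /\ LR_basic U V `<=` E.

End Monoid.

Definition ball_ent {T : Type} (x : T) (E : set (T * T)) : set T := [set y | E (x, y)].
Definition ball_set {T : Type} (A : set T) (E : set (T * T)) : set T :=
  \bigcup_(a in A) ball_ent a E.
Definition ent_comp {T : Type} (E F : set (T * T)) : set (T * T) :=
  [set p | exists y, E (p.1, y) /\ F (y, p.2)].

Definition qu_open {T : Type} (ent : set (T * T) -> Prop) (W : set T) : Prop :=
  forall x, W x -> exists E, ent E /\ ball_ent x E `<=` W.

Definition qu_generates_topology {T : topologicalType} (ent : set (T * T) -> Prop) : Prop :=
  forall W : set T, open W <-> qu_open ent W.

Definition open_unit {T : topologicalType} (mul : T -> T -> T) (e : T) : Prop :=
  forall U : set T, nbhs e U -> forall x, nbhs x (triple_prod mul U x U).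

Definition open_map {X Y : topologicalType} (f : X -> Y) : Prop :=
  forall O : set X, open O -> open (f @` O).

Definition open_central_shifts {T : topologicalType} (mul : T -> T -> T) : Prop :=
  forall a : T, open_map (fun p : T * T => mul (mul p.1 a) p.2).

Definition qu_base {T : Type} (ent : set (T * T) -> Prop) (B : set (set (T * T))) : Prop :=
  (forall E, B E -> ent E) /\ (forall E, ent E -> exists2 F, B F & F `<=` E).

Definition rotund_family {T : topologicalType} (B : set (set (T * T))) : Prop :=
  forall (A : set T) (U W : set (T * T)), B U -> B W ->
    ball_set (closure A) U `<=` closure (ball_set A (ent_comp W U)).

Definition qu_rotund {T : topologicalType} (ent : set (T * T) -> Prop) : Prop :=
  exists B : set (set (T * T)), qu_base ent B /\
    (forall U W, B U -> B W -> B (ent_comp U W)) /\ rotund_family B.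

(* Main.v *)
Require Import Defs.
From mathcomp Require Import all_boot all_order.
From mathcomp Require Import all_classical topology.
Local Open Scope classical_set_scope.

Section Aux.
Context {T : topologicalType} {mul : T -> T -> T} {e : T}.
Hypothesis cont : continuous (fun p : T * T => mul p.1 p.2).
Hypothesis assoc : forall x y z, mul x (mul y z) = mul (mul x y) z.
Hypothesis ml : forall x, mul e x = x.
Hypothesis mr : forall x, mul x e = x.

Lemma prodP {x y : T} {O : set (T * T)} : nbhs (x, y) O ->
  exists A B, nbhs x A /\ nbhs y B /\ forall a b, A a -> B b -> O (a, b).
Proof.
case=> -[A B] /= [HA HB] sub.
exists A, B; split => //; split => // a b Aa Bb.
exact: (sub (a, b)).
Qed.

Lemma H2 {x y N} : nbhs (mul x y) N -> exists A B, nbhs x A /\ nbhs y B /\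
    forall a b, A a -> B b -> N (mul a b).
Proof.
move=> HN.
have [A [B [HA [HB sub]]]] := prodP (cont (x, y) N HN).
by exists A, B; split => //; split => // a b Aa Bb; apply: (sub a b).
Qed.

Lemma H3 {x y z N} : nbhs (mul (mul x y) z) N -> exists P Q R,
  nbhs x P /\ nbhs y Q /\ nbhs z R /\
  forall p q r, P p -> Q q -> R r -> N (mul (mul p q) r).
Proof.
move=> /H2 [A [R [HA [HR sub]]]].
have [P [Q [HP [HQ sub2]]]] := H2 HA.
exists P, Q, R; do 3 (split => //).
by move=> p q r Pp Qq Rr; apply: sub => //; apply: sub2.
Qed.

Lemma open_qu W : open W -> qu_open (LR_entourage mul e) W.
Proof.
move=> oW x Wx.
have : nbhs (mul (mul e x) e) W by rewrite ml mr; apply: open_nbhs_nbhs; split.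
move=> /H3 [P [Q [R [HP [HQ [HR sub]]]]]].
exists (LR_basic mul P R); split; first by exists P, R; do 2 split => //.
move=> y; rewrite /ball_ent /LR_basic /= => -[u Pu [v Rv <-]]; apply: sub => //.
exact: nbhs_singleton.
Qed.

End Aux.

Theorem proposition5p1 (T : topologicalType) (mul : T -> T -> T) (e : T) :
  topological_monoid mul e ->
  (qu_generates_topology (LR_entourage mul e) <-> open_unit mul e) /\
  (open_unit mul e <-> open_central_shifts mul) /\
  (open_unit mul e -> qu_rotund (LR_entourage mul e)).
Proof.
move=> [cont [assoc [ml mr]]].
have oq := open_qu cont ml mr.
split; [split|split; [split|]].
- move=> gen U HU x.
  pose W := fun y => exists P Q, nbhs e P /\ nbhs e Q /\
     triple_prod mul P y Q `<=` triple_prod mul U x U.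
  have oW : open W.
    apply/gen => y [P [Q [HP [HQ sub]]]].
    have [P1 [P2 [HP1 [HP2 subP]]]] : exists A B, nbhs e A /\ nbhs e B /\
        forall a b, A a -> B b -> P (mul a b).
      by apply: (H2 cont); rewrite ml.
    have [Q1 [Q2 [HQ1 [HQ2 subQ]]]] : exists A B, nbhs e A /\ nbhs e B /\
        forall a b, A a -> B b -> Q (mul a b).
      by apply: (H2 cont); rewrite ml.
    exists (LR_basic mul P2 Q1); split; first by exists P2, Q1; do 2 split => //.
    move=> z; rewrite /ball_ent /LR_basic /= => -[p2 Pp2 [q1 Qq1 <-]].
    exists P1, Q2; split => //; split => //.
    move=> w [p1 Pp1 [q2 Qq2 <-]]; apply: sub.
    exists (mul p1 p2); first exact: subP.
    exists (mul q1 q2); first exact: subQ.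
    by rewrite !assoc.
  have Wx : W x by exists U, U; do 2 split => //.
  have : nbhs x W by apply: open_nbhs_nbhs; split.
  apply: filterS => y [P [Q [HP [HQ sub]]]]; apply: sub.
  exists e; first exact: nbhs_singleton.
  exists e; first exact: nbhs_singleton.
  by rewrite ml mr.
- move=> ou W; split; first exact: oq.
  move=> qW; rewrite openE => x Wx.
  have [E [[U [V [HU [HV sUV]]]] sub]] := qW x Wx.
  apply: (filterS _ (ou (U `&` V) (filterI HU HV) x)) => y [u [Uu _] [v [_ Vv] <-]].
  apply: sub; apply: sUV.
  by exists u => //; exists v.
- move=> ou a O oO; rewrite openE => z [[y w] Oyw <-].
  move: oO; rewrite openE => /(_ _ Oyw); rewrite /interior => /prodP [A [B [HA [HB sAB]]]].
  have [P1 [P2 [HP1 [HP2 subP]]]] : exists C D, nbhs e C /\ nbhs y D /\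
      forall c d, C c -> D d -> A (mul c d).
    by apply: (H2 cont); rewrite ml.
  have [Q1 [Q2 [HQ1 [HQ2 subQ]]]] : exists C D, nbhs w C /\ nbhs e D /\
      forall c d, C c -> D d -> B (mul c d).
    by apply: (H2 cont); rewrite mr.
  apply: (filterS _ (ou (P1 `&` Q2) (filterI HP1 HQ2) (mul (mul y a) w))) => t [u [Pu _] [v [_ Qv] <-]].
  exists (mul u y, mul w v).
    apply: sAB; [apply: subP | apply: subQ] => //; exact: nbhs_singleton.
  by rewrite /= !assoc.
- move=> ocs U HU x.
  have := HU; rewrite nbhsE => -[O [oO Oe] sOU].
  have oOO : open (O `*` O).
    rewrite openE => -[p q] [/= Op Oq]; rewrite /interior.
    exists (O, O) => //=; split; apply: open_nbhs_nbhs; split => //.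
  have := ocs x _ oOO.
  set Z := (X in open X) => oZ.
  have : nbhs x Z.
    apply: open_nbhs_nbhs; split => //.
    by exists (e, e) => //=; rewrite ml mr.
  apply: filterS => t [[p q] [/= Op Oq] <-].
  by exists p; [apply: sOU | exists q => //; apply: sOU].
- move=> _.
  pose B := fun E : set (T * T) => exists U V, nbhs e U /\ nbhs e V /\
    E = LR_basic mul U V.
  exists B; split; [split|split].
  + by move=> E [U [V [HU [HV ->]]]]; exists U, V; do 2 split => //.
  + move=> E [U [V [HU [HV sub]]]]; exists (LR_basic mul U V) => //.
    by exists U, V.
  + move=> E1 E2 [U1 [V1 [HU1 [HV1 ->]]]] [U2 [V2 [HU2 [HV2 ->]]]].
    exists [set mul a b | a in U2 & b in U1], [set mul a b | a in V1 & b in V2].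
    split.
      move: HU2; apply: filterS => u Uu; exists u => //.
      by exists e; [apply: nbhs_singleton | rewrite mr].
    split.
      move: HV2; apply: filterS => u Uu; exists e; first exact: nbhs_singleton.
      by exists u; [|rewrite ml].
    apply/seteqP; split => -[x z] /=.
    * move=> [y []]; rewrite /LR_basic /triple_prod /= => -[u1 Hu1 [v1 Hv1 <-]] [u2 Hu2 [v2 Hv2 <-]].
      exists (mul u2 u1); first by exists u2 => //; exists u1.
      exists (mul v1 v2); first by exists v1 => //; exists v2.
      by rewrite !assoc.
    * rewrite /LR_basic /triple_prod /= => -[_ [u2 Hu2 [u1 Hu1 <-]] [_ [v1 Hv1 [v2 Hv2 <-]] <-]].
      exists (mul (mul u1 x) v1); split; first by exists u1 => //; exists v1.
      exists u2 => //; exists v2 => //.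
      by rewrite !assoc.
  + move=> A E1 E2 [U1 [V1 [HU1 [HV1 ->]]]] [U2 [V2 [HU2 [HV2 ->]]]].
    move=> z [a Ca]; rewrite /ball_ent /LR_basic /triple_prod /= => -[u Uu [v Vv <-]] N HN.
    have [P [Q [R [HP [HQ [HR sub]]]]]] := H3 cont HN.
    have [a' [Aa' Qa']] := Ca Q HQ.
    exists (mul (mul u a') v); split; last first.
      by apply: sub => //; apply: nbhs_singleton.
    exists a' => //.
    exists a'; split.
      exists e; first exact: nbhs_singleton.
      exists e; first exact: nbhs_singleton.
      by rewrite ml mr.
    by exists u => //; exists v.
Qed.
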